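(* Let $G=Q_8=\{\pm E,\pm I,\pm J,\pm K\}$ be the quaternion group ($IJ=-JI=K$, $JK=-KJ=I$, $KI=-IK=J$, $IJK=-E$). Then the class semigroup $\mathcal C(\mathcal B(G),\mathcal F(G))$ has exactly $18$ elements.
   Context: For a finite group $G$ (multiplicative, identity $1_G$), $\mathcal F(G)$ is the free abelian monoid with basis $G$ (sequences $S=g_1\boldsymbol{\cdot}\ldots\boldsymbol{\cdot}g_\ell$, operation $\boldsymbol{\cdot}$ = concatenation). $\pi(S)=\{g_{\tau(1)}\cdots g_{\tau(\ell)}:\tau\text{ a permutation of }[1,\ell]\}$, $\pi$ of the empty sequence is $\{1_G\}$, and $\mathcal B(G)=\{S\in\mathcal F(G):1_G\in\pi(S)\}$. For $S,S'\in\mathcal F(G)$, $S\sim S'$ means: for all $T\in\mathcal F(G)$, $S\boldsymbol{\cdot}T\in\mathcal B(G)\iff S'\boldsymbol{\cdot}T\in\mathcal B(G)$; this is a congruence and the class semigroup $\mathcal C(\mathcal B(G),\mathcal F(G))$ is the set of its equivalence classes. *)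

(* Defs.v *)
From HB Require Import structures.
From mathcomp Require Import all_boot all_fingroup all_solvable.
Set Implicit Arguments. Unset Strict Implicit. Unset Printing Implicit Defensive.

Local Open Scope group_scope.

Section ClassSemigroup.
Variable gT : finGroupType.

(* F(G): sequences over G, represented as lists taken up to permutation;
   concatenation is ++.  pi(S) = products of all orderings of S
   (the empty product is 1). *)
Definition pi_seq (S : seq gT) (g : gT) : Prop :=
  exists t : seq gT, perm_eq S t /\ \prod_(x <- t) x = g.

Definition in_B (S : seq gT) : Prop := pi_seq S 1.

Definition class_equiv (S S' : seq gT) : Prop :=
  forall T : seq gT, in_B (S ++ T) <-> in_B (S' ++ T).

Definition class_semigroup_card (n : nat) : Prop :=
  exists reps : seq (seq gT),
    size reps = n /\
    (forall i j, i < n -> j < n -> i <> j ->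
        ~ class_equiv (nth [::] reps i) (nth [::] reps j)) /\
    (forall S : seq gT, exists2 i, i < n & class_equiv S (nth [::] reps i)).
End ClassSemigroup.

(* Main.v *)
Require Import Defs.
From mathcomp Require Import all_boot all_fingroup all_solvable.
From mathcomp Require Import zify.
Set Implicit Arguments. Unset Strict Implicit. Unset Printing Implicit Defensive.


Notation C := (bool * bool * bool)%type.
Definition ix (a : C) : nat := (2 * a.1.1 + a.1.2)%N.
Definition ofn (n : nat) (j : bool) : C := (odd n./2, odd n, j).
Definition mulC (a b : C) : C :=
  ofn (ix a + (if a.2 then 3 * ix b else ix b) + (if a.2 && b.2 then 2 else 0)) (a.2 (+) b.2).
Definition oneC : C := (false, false, false).
Definition zC : C := (true, false, false).
Definition allC : seq C := [:: (false, false, false); (false, false, true); (false, true, false); (false, true, true); (true, false, false); (true, false, true); (true, true, false); (true, true, true)].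
Definition prodC (t : seq C) : C := foldr mulC oneC t.
Notation M := (bool * bool * bool)%type.
Definition orM (u v : M) : M := (u.1.1 || v.1.1, u.1.2 || v.1.2, u.2 || v.2).
Definition zeroM : M := (false, false, false).
Definition subM (u v : M) : bool := (u.1.1 ==> v.1.1) && (u.1.2 ==> v.1.2) && (u.2 ==> v.2).
Definition cntM (u : M) : nat := u.1.1 + u.1.2 + u.2.
Definition ax (a : C) : M :=
  if a.2 then (if a.1.2 then (false,false,true) else (false,true,false))
  else (if a.1.2 then (true,false,false) else zeroM).
Definition maskS (S : seq C) : M := foldr (fun a m => orM (ax a) m) zeroM S.
Notation V := (M * C)%type.
Definition invS (S : seq C) : V := (maskS S, prodC S).
Definition comb (v w : V) : V := (orM v.1 w.1, mulC v.2 w.2).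
Definition ab (a : C) : bool * bool := (a.1.2, a.2).
Definition good (v : V) : bool :=
  if cntM v.1 <= 1 then v.2 == oneC else ab v.2 == (false, false).
Definition step (vs : seq V) : seq V :=
  undup (vs ++ [seq comb (invS [:: x]) v | x <- allC, v <- vs]).
Definition valsL : seq V := iter 5 step [:: invS [::]].
Definition el (i : nat) (b : bool) : C := ofn i b.
Definition repsC : seq (seq C) :=
 [:: [::]; [:: el 1 false]; [:: el 2 false]; [:: el 3 false]; [:: el 0 true];
     [:: el 1 true]; [:: el 2 true]; [:: el 3 true]; [:: el 1 false; el 1 false];
     [:: el 1 false; el 3 false]; [:: el 1 false; el 0 true]; [:: el 1 false; el 1 true];
     [:: el 0 true; el 0 true]; [:: el 0 true; el 1 true]; [:: el 0 true; el 2 true];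
     [:: el 1 true; el 1 true]; [:: el 1 true; el 3 true];
     [:: el 1 false; el 0 true; el 1 true]].
Definition pickv (v : V) : nat :=
  find (fun R => all (fun w => good (comb v w) == good (comb (invS R) w)) valsL) repsC.
Definition seqs2 : seq (seq C) :=
  [:: [::]] ++ [seq [:: x] | x <- allC] ++ [seq [:: x; y] | x <- allC, y <- allC].

Lemma closure_ok : all (fun v => all (fun x => comb (invS [:: x]) v \in valsL) (allC)) valsL.
Proof. by vm_compute. Qed.
Lemma pick_ok : all (fun v => pickv v < 18) valsL.
Proof. by vm_compute. Qed.
Lemma dist_ok : all (fun i => all (fun j => (i == j) || has (fun T =>
   good (comb (invS (nth [::] repsC i)) (invS T)) != good (comb (invS (nth [::] repsC j)) (invS T))) seqs2) (iota 0 18)) (iota 0 18).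
Proof. by vm_compute. Qed.
Lemma mulCA_b : all (fun a => all (fun b => all (fun c => mulC a (mulC b c) == mulC (mulC a b) c) (allC)) (allC)) (allC).
Proof. by vm_compute. Qed.

Ltac bash3 := by move=> [[[] []] []] [[[] []] []] [[[] []] []].

Lemma mulCA a b c : mulC a (mulC b c) = mulC (mulC a b) c.
Proof. by move: a b c => [[[] []] []] [[[] []] []] [[[] []] []]. Qed.
Lemma mul1C a : mulC oneC a = a. Proof. by move: a => [[[] []] []]. Qed.
Lemma mulC1 a : mulC a oneC = a. Proof. by move: a => [[[] []] []]. Qed.
Definition comm (a b : C) := mulC a b == mulC b a.
Lemma commxx a : comm a a. Proof. by rewrite /comm. Qed.
Lemma F0 x : (ax x == zeroM) || subM zeroM (ax x). Proof. by move: x => [[[] []] []]. Qed.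
Lemma F1 x b m : comm x b && ((ax x == zeroM) || subM m (ax x)) = (ax x == zeroM) || subM (orM (ax b) m) (ax x).
Proof. by move: x b m => [[[] []] []] [[[] []] []] [[[] []] []]. Qed.
Lemma F2 x m : ((ax x == zeroM) || subM m (ax x)) && (cntM m <= 1) = (cntM (orM (ax x) m) <= 1).
Proof. by move: x m => [[[] []] []] [[[] []] []]. Qed.
Lemma F3 a b r : ~~ comm a b -> mulC b (mulC a r) = mulC zC (mulC a (mulC b r)).
Proof. by move: a b r => [[[] []] []] [[[] []] []] [[[] []] []]. Qed.
Lemma F4 p : ab p = (false, false) -> p = oneC \/ p = zC.
Proof. by move: p => [[[] []] []]; auto. Qed.
Lemma F5 : mulC zC zC = oneC. Proof. by []. Qed.
Lemma abM a b : ab (mulC a b) = ((ab a).1 (+) (ab b).1, (ab a).2 (+) (ab b).2).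
Proof. by move: a b => [[[] []] []] [[[] []] []]. Qed.
Lemma orMA u v w : orM u (orM v w) = orM (orM u v) w.
Proof. by move: u v w => [[[] []] []] [[[] []] []] [[[] []] []]. Qed.
Lemma or0M u : orM zeroM u = u. Proof. by move: u => [[[] []] []]. Qed.

Lemma prodC_cat S T : prodC (S ++ T) = mulC (prodC S) (prodC T).
Proof. by elim: S => [|x S IH] /=; rewrite ?mul1C // IH mulCA. Qed.
Lemma maskS_cat S T : maskS (S ++ T) = orM (maskS S) (maskS T).
Proof. by elim: S => [|x S IH] /=; rewrite ?or0M // IH orMA. Qed.
Lemma inv_cat S T : invS (S ++ T) = comb (invS S) (invS T).
Proof. by rewrite /invS /comb /= prodC_cat maskS_cat. Qed.

Lemma ab_prod t : ab (prodC t) = (odd (count (fun a : C => a.1.2) t), odd (count (fun a : C => a.2) t)).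
Proof.
elim: t => [|x t IH] //=; rewrite abM IH /= !oddD.
by case: x => [[h l] j] /=; rewrite !oddb.
Qed.
Lemma ab_perm S t : perm_eq S t -> ab (prodC S) = ab (prodC t).
Proof. by move/seq.permP=> H; rewrite !ab_prod !H. Qed.

Fixpoint commS (S : seq C) : bool :=
  if S is x :: S' then all (comm x) S' && commS S' else true.

Lemma comm_sym a b : comm a b = comm b a.
Proof. by rewrite /comm eq_sym. Qed.

Lemma comm_prod x t : all (comm x) t -> mulC x (prodC t) = mulC (prodC t) x.
Proof.
elim: t => [|y t IH] /=; first by rewrite mul1C mulC1.
case/andP=> /eqP hxy /IH h.
by rewrite mulCA hxy -mulCA h mulCA.
Qed.

Lemma commS_perm S t : commS S -> perm_eq S t -> prodC S = prodC t.
Proof.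
elim: S t => [|x S IH] t /=.
  by move=> _; rewrite perm_sym => /perm_nilP ->.
case/andP=> hx hS hp.
have xt : x \in t by rewrite -(perm_mem hp) mem_head.
case/splitPr: xt hp => t1 t2 hp.
have hp' : perm_eq S (t1 ++ t2).
  rewrite -(perm_cons x); apply: (perm_trans hp).
  by apply/seq.permP=> P; rewrite /= !count_cat /= addnCA.
rewrite (IH _ hS hp') !prodC_cat /= mulCA.
have : all (comm x) t1.
  apply/allP=> y yt1.
  have : y \in x :: S by rewrite (perm_mem hp) mem_cat yt1.
  rewrite inE; case/orP=> [/eqP -> | yS]; first exact: commxx.
  exact: (allP hx).
by move/comm_prod=> ->; rewrite -mulCA.
Qed.

Lemma all_comm_mask x S : all (comm x) S = (ax x == zeroM) || subM (maskS S) (ax x).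
Proof. by elim: S => [|b S IH] /=; [rewrite F0 | rewrite IH F1]. Qed.

Lemma commS_mask S : commS S = (cntM (maskS S) <= 1).
Proof. by elim: S => [|x S IH] //=; rewrite all_comm_mask IH F2. Qed.

Lemma noncomm S : ~~ commS S -> exists a b, [/\ a \in S, b \in S & ~~ comm a b].
Proof.
elim: S => [|x S IH] //=.
rewrite negb_and; case/orP.
  case/allPn=> b bS nc; exists x, b; split=> //; first exact: mem_head.
  by rewrite inE bS orbT.
move/IH=> [a [b [aS bS nc]]]; exists a, b; by rewrite !inE aS bS !orbT.
Qed.

Definition in_BC (S : seq C) : Prop := exists t, perm_eq S t /\ prodC t = oneC.

Lemma charB S : in_BC S <-> good (invS S).
Proof.
rewrite /good /invS /= -commS_mask; split.
  case=> t [hp ht]; case: ifP => hc.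
    by rewrite (commS_perm hc hp) ht.
  by rewrite (ab_perm hp) ht.
case: ifP => hc.
  by move/eqP=> h; exists S; split.
move/eqP=> hab.
have [a [b [aS bS nc]]] : exists a b, [/\ a \in S, b \in S & ~~ comm a b].
  by apply: noncomm; rewrite hc.
have ba : b != a by apply: contraNneq nc => ->; rewrite commxx.
have hpa := perm_to_rem aS.
have bR : b \in rem a S.
  by move: bS; rewrite (perm_mem hpa) inE (negbTE ba).
have hpb := perm_to_rem bR.
set R := rem b (rem a S) in hpb.
have hp1 : perm_eq S [:: a, b & R] by apply: (perm_trans hpa); rewrite perm_cons.
have hp2 : perm_eq S [:: b, a & R].
  apply: (perm_trans hp1).
  by apply/seq.permP=> P; rewrite /= addnCA.
have : ab (prodC [:: a, b & R]) = (false, false) by rewrite -(ab_perm hp1).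
case/F4=> h1.
  by exists [:: a, b & R].
exists [:: b, a & R]; split=> //.
move: h1 => /= h1; rewrite F3 // h1; exact: F5.
Qed.

Local Open Scope group_scope.

Definition psi (gT : finGroupType) (x y : gT) (a : C) : gT := x ^+ ix a * y ^+ a.2.

Lemma ix_ofn (gT : finGroupType) (x : gT) n j : x ^+ 4 = 1 -> x ^+ ix (ofn n j) = x ^+ n.
Proof.
move=> x4.
have e1 := odd_double_half n; have e2 := odd_double_half n./2.
have E : n = (ix (ofn n j) + 4 * n./2./2)%N.
  rewrite /ix /ofn /= -!muln2 in e1 e2 *; lia.
by rewrite [in RHS]E (expgD x (ix (ofn n j))) expgM x4 expg1n mulg1.
Qed.

Lemma yx_comm (gT : finGroupType) (x y : gT) k :
  x ^+ 4 = 1 -> x ^ y = x^-1 -> y * x ^+ k = x ^+ (3 * k) * y.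
Proof.
move=> x4 xy.
have h : (x ^+ (3 * k)) ^ y = x ^+ k.
  rewrite conjXg xy expgVn; apply/eqP; rewrite eq_invg_mul -expgD.
  by rewrite addnC -mulSn expgM x4 expg1n.
by rewrite -h conjgE mulKVg.
Qed.

Lemma mulpsi (gT : finGroupType) (x y : gT) a b :
  x ^+ 4 = 1 -> y ^+ 2 = x ^+ 2 -> x ^ y = x^-1 ->
  psi x y (mulC a b) = psi x y a * psi x y b.
Proof.
move=> x4 y2 xy; rewrite /psi /mulC ix_ofn //=.
case: a b => [a j] [b l] /=.
move: (ix (a, j)) (ix (b, l)) => i k.
case: j; case: l => /=; rewrite ?expg0 ?expg1 ?mulg1 ?addn0.
- rewrite mulgA -(mulgA _ y) yx_comm // !mulgA -(mulgA _ y y) -[y * y]/(y ^+ 2) y2.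
  by rewrite -!expgD.
- by rewrite -(mulgA _ y) yx_comm // !mulgA -expgD.
- by rewrite mulgA -expgD.
- by rewrite -expgD.
Qed.

Lemma psi_inj (gT : finGroupType) (x y : gT) :
  #[x] = 4 -> y \notin <[x]> -> injective (psi x y).
Proof.
move=> ox ny [a j] [b l]; rewrite /psi /= => h.
have ixlt c d : ix (c, d) < 4 by case: c => [[] []].
have fin : x ^+ ix (a, j) = x ^+ ix (b, l) -> j = l -> (a, j) = (b, l).
  move=> /eqP; rewrite eq_expg_mod_order ox !modn_small ?ixlt // => /eqP.
  by move: (a) (b) => [[] []] [[] []] //= _ ->.
case: j l h fin => [] [] /= h fin; rewrite ?expg1 ?expg0 ?mulg1 in h.
- by apply: fin => //; apply: (mulIg y).
- case/negP: ny.
  have -> : y = (x ^+ ix (a, true))^-1 * x ^+ ix (b, false) by rewrite -h mulKg.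
  by rewrite groupM ?groupV ?mem_cycle.
- case/negP: ny.
  have -> : y = (x ^+ ix (b, true))^-1 * x ^+ ix (a, false) by rewrite h mulKg.
  by rewrite groupM ?groupV ?mem_cycle.
- by apply: fin.
Qed.

Lemma psi_prod (gT : finGroupType) (x y : gT) u :
  x ^+ 4 = 1 -> y ^+ 2 = x ^+ 2 -> x ^ y = x^-1 ->
  psi x y (prodC u) = \prod_(a <- map (psi x y) u) a.
Proof.
move=> x4 y2 xy; elim: u => [|c u IH] /=.
  by rewrite big_nil /psi /= !expg0 mulg1.
by rewrite big_cons mulpsi // IH.
Qed.

Lemma memC (a : C) : a \in allC. Proof. by move: a => [[[] []] []]. Qed.

Lemma invS_vals T : invS T \in valsL.
Proof.
elim: T => [|a T IH]; first by vm_compute.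
rewrite -cat1s inv_cat.
by move/allP: closure_ok => /(_ _ IH) /allP /(_ a (memC a)).
Qed.

Lemma charB_cat S T : in_BC (S ++ T) <-> good (comb (invS S) (invS T)).
Proof. by rewrite -inv_cat; apply: charB. Qed.

Lemma size_repsC : size repsC = 18. Proof. by []. Qed.

Theorem mainTheorem10 : class_semigroup_card (quaternion_gtype 8) 18.
Proof.
pose gT := quaternion_gtype 8.
have [[x y] [oG xG ox yGx] [oy y2 xy]] :=
  @generators_quaternion gT [set: gT]%G 3 isT (isog_refl _).
have ox4 : #[x] = 4 by rewrite ox.
have x4 : x ^+ 4 = 1 by rewrite -ox4 expg_order.
have ny : y \notin <[x]> by case/setDP: yGx.
have y2' : y ^+ 2 = x ^+ 2 by rewrite y2.
have inj := psi_inj ox4 ny.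
have cardC : #|{: bool * bool * bool}| = 8 by rewrite !card_prod !card_bool.
have cG : #|gT| = 8.
  move: oG; rewrite cardsT. move=> ->. reflexivity.
have cardT : #|gT| <= #|{: bool * bool * bool}| by rewrite cardC cG.
have [phi psiK phiK] := inj_card_bij inj cardT.
have tr S : in_B (map (psi x y) S) <-> in_BC S.
  split.
    case=> t [hp ht]; exists (map phi t); split.
      apply: (perm_map_inj inj); rewrite -map_comp (eq_map phiK) map_id //.
    apply: inj; rewrite psi_prod // -map_comp (eq_map phiK) map_id ht.
    by rewrite /psi /= !expg0 mulg1.
  case=> t [hp ht]; exists (map (psi x y) t); split; first exact: perm_map.
  by rewrite -psi_prod // ht /psi /= !expg0 mulg1.
have trc S T : in_B (map (psi x y) S ++ map (psi x y) T) <-> good (comb (invS S) (invS T)).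
  by rewrite -map_cat tr charB_cat.
have nthR i : nth [::] (map (map (psi x y)) repsC) i = map (psi x y) (nth [::] repsC i).
  have [lt|ge] := ltnP i (size repsC); first by rewrite (nth_map [::]).
  by rewrite !nth_default ?size_map.
exists (map (map (psi x y)) repsC); split; first by rewrite size_map.
split.
  move=> i j hi hj hij; rewrite !nthR => heq.
  move/allP: dist_ok => /(_ i); rewrite mem_iota hi => /(_ isT) /allP /(_ j).
  rewrite mem_iota hj => /(_ isT); have -> : (i == j) = false by apply/eqP.
  case/hasP=> T _ hneq.
  have := heq (map (psi x y) T); rewrite !trc => h.
  have e : good (comb (invS (nth [::] repsC i)) (invS T)) = good (comb (invS (nth [::] repsC j)) (invS T)).
    by apply/idP/idP => /h.
  by rewrite e eqxx in hneq.
move=> S.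
have eS : S = map (psi x y) (map phi S) by rewrite -map_comp (eq_map phiK) map_id.
set S' := map phi S.
have vS := invS_vals S'.
move/allP: pick_ok => /(_ _ vS) hp.
exists (pickv (invS S')); first exact: hp.
move=> T; have eT : T = map (psi x y) (map phi T) by rewrite -map_comp (eq_map phiK) map_id.
rewrite eS eT nthR !trc.
have hh : has (fun R => all (fun w => good (comb (invS S') w) == good (comb (invS R) w)) valsL) repsC.
  rewrite has_find size_repsC; exact: hp.
have := nth_find [::] hh.
move=> /allP /(_ _ (invS_vals (map phi T))) /eqP.
rewrite -/(pickv (invS S')) => ->.
split; exact: id.
Qed.
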